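(* Let $I$ be a finite set and let $g_\bullet\colon\mathbb{Z}\to\mathbb{Z}$ be a gp map parametrised by $\mathbb{R}^I$. Then there exist finite sets $J,K$ and a gp map $\tilde g_\bullet\colon\mathbb{Z}\to\mathbb{Z}$ parametrised by $\mathbb{Z}^J\times[0,1)^K$ such that $\tilde g_\bullet$ extends $g_\bullet$ and $\tilde g_\bullet$ takes the form \[ \tilde g_{a,\beta} = \sum_{j\in J} a_j h^{(j)}_{\beta},\qquad a\in\mathbb{Z}^J,\ \beta\in[0,1)^K, \] where for each $j\in J$, $h^{(j)}_\bullet\colon\mathbb{Z}\to\mathbb{Z}$ is a gp map parametrised by $[0,1)^K$.
   Context: A generalised polynomial (gp) map $\mathbb{R}^d\to\mathbb{R}$ is an element of the smallest family containing all polynomial maps and closed under pointwise sum, pointwise product and pointwise integer part $\lfloor\cdot\rfloor$; a map $\mathbb{R}^d\to\mathbb{R}^m$ is gp if each coordinate is. For pairwise disjoint finite sets $I_r,I_i,I_f$ and $\Omega = \mathbb{R}^{I_r}\times\mathbb{Z}^{I_i}\times[0,1)^{I_f}$, a gp map $\mathbb{Z}\to\mathbb{Z}$ parametrised by $\Omega$ is a family $(g_\alpha)_{\alpha\in\Omega}$ of maps $\mathbb{Z}\to\mathbb{Z}$ such that $(\alpha,n)\mapsto g_\alpha(n)$ is the restriction to $\Omega\times\mathbb{Z}$ of a gp map $\mathbb{R}^{I_r\cup I_i\cup I_f}\times\mathbb{R}\to\mathbb{R}$. If $g_\bullet$ is parametrised by $\Omega$ and $h_\bullet$ by $\Omega'=\mathbb{R}^{J_r}\times\mathbb{Z}^{J_i}\times[0,1)^{J_f}$,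 we say $h_\bullet$ extends $g_\bullet$ if there is a gp map $\varphi\colon\mathbb{R}^{I_r\cup I_i\cup I_f}\to\mathbb{R}^{J_r\cup J_i\cup J_f}$ with $\varphi(\Omega)\subset\Omega'$ and $g_\alpha = h_{\varphi(\alpha)}$ for all $\alpha\in\Omega$. *)

(* Defs.v *)
From Stdlib Require Import Reals ZArith List FinFun.
Open Scope R_scope.

Definition gfloor (r : R) : R := IZR (Int_part r).

(* Syntax of generalised polynomial expressions in variables of type V. *)
Inductive gpexpr (V : Type) : Type :=
| gConst : R -> gpexpr V
| gVar : V -> gpexpr V
| gAdd : gpexpr V -> gpexpr V -> gpexpr V
| gMul : gpexpr V -> gpexpr V -> gpexpr V
| gFloor : gpexpr V -> gpexpr V.
Arguments gConst {V}. Arguments gVar {V}. Arguments gAdd {V}.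
Arguments gMul {V}. Arguments gFloor {V}.

Fixpoint geval {V : Type} (x : V -> R) (e : gpexpr V) : R :=
  match e with
  | gConst c => c
  | gVar v => x v
  | gAdd e1 e2 => geval x e1 + geval x e2
  | gMul e1 e2 => geval x e1 * geval x e2
  | gFloor e1 => gfloor (geval x e1)
  end.

(* gp maps R^V -> R: exactly the evaluations of gp expressions (the smallest
   family containing polynomials closed under +, *, floor). *)
Definition is_gp_fun {V : Type} (f : (V -> R) -> R) : Prop :=
  exists e : gpexpr V, forall x, f x = geval x e.

Definition is_gp_map {V W : Type} (phi : (V -> R) -> (W -> R)) : Prop :=
  forall w : W, is_gp_fun (fun x => phi x w).

(* Parameter vectors live in R^(Ir ⊔ Ii ⊔ If); Omega is the subset
   R^Ir x Z^Ii x [0,1)^If. *)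
Definition PVar (Ir Ii If : Type) : Type := (Ir + Ii + If)%type.

Definition in_Omega {Ir Ii If : Type} (x : PVar Ir Ii If -> R) : Prop :=
  (forall i : Ii, exists z : Z, x (inl (inr i)) = IZR z) /\
  (forall k : If, 0 <= x (inr k) < 1).

(* A gp map Z -> Z parametrised by Omega: a family g (only its values on
   Omega matter) such that (alpha, n) |-> g alpha n is the restriction to
   Omega x Z of a gp map R^(Ir ⊔ Ii ⊔ If) x R -> R (the extra variable
   None is the argument n). *)
Definition gp_param {Ir Ii If : Type} (g : (PVar Ir Ii If -> R) -> Z -> Z) : Prop :=
  exists e : gpexpr (option (PVar Ir Ii If)),
    forall x, in_Omega x -> forall n : Z,
      IZR (g x n) = geval (fun v => match v with Some u => x u | None => IZR n end) e.

Definition gp_extends {Ir Ii If Jr Ji Jf : Type}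
  (g : (PVar Ir Ii If -> R) -> Z -> Z) (h : (PVar Jr Ji Jf -> R) -> Z -> Z) : Prop :=
  exists phi : (PVar Ir Ii If -> R) -> (PVar Jr Ji Jf -> R),
    is_gp_map phi /\
    (forall x, in_Omega x -> in_Omega (phi x)) /\
    (forall x, in_Omega x -> forall n : Z, g x n = h (phi x) n).

Definition embK {J K : Type} (v : PVar Empty_set Empty_set K) : PVar Empty_set J K :=
  match v with
  | inl (inl e) => match e with end
  | inl (inr e) => match e with end
  | inr k => inr k
  end.

(* Main.v *)
Require Import Defs.
From Stdlib Require Import Reals ZArith List FinFun Lra Lia.
Open Scope R_scope.

Definition sumR {A : Type} (f : A -> R) (l : list A) : R := fold_right Rplus 0 (map f l).

Lemma sumR_nil {A} (f : A -> R) : sumR f nil = 0. Proof. reflexivity. Qed.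
Lemma sumR_cons {A} (f : A -> R) a l : sumR f (a :: l) = f a + sumR f l.
Proof. reflexivity. Qed.
Lemma sumR_app {A} (f : A -> R) l1 l2 : sumR f (l1 ++ l2) = sumR f l1 + sumR f l2.
Proof. induction l1; unfold sumR in *; simpl; [ring|]. rewrite IHl1; ring. Qed.
Lemma sumR_map {A B} (f : B -> R) (g : A -> B) l : sumR f (map g l) = sumR (fun a => f (g a)) l.
Proof. unfold sumR; rewrite map_map; reflexivity. Qed.
Lemma sumR_ext {A} (f g : A -> R) l : (forall a, In a l -> f a = g a) -> sumR f l = sumR g l.
Proof. intros H; unfold sumR; rewrite (map_ext_in f g l H); reflexivity. Qed.
Lemma sumR_plus {A} (f g : A -> R) l : sumR (fun a => f a + g a) l = sumR f l + sumR g l.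
Proof. induction l; simpl; [unfold sumR; simpl; ring|]. unfold sumR in *; simpl; rewrite IHl; ring. Qed.
Lemma sumR_scal {A} (c : R) (f : A -> R) l : c * sumR f l = sumR (fun a => c * f a) l.
Proof. induction l; unfold sumR in *; simpl; [ring|]. rewrite <- IHl; ring. Qed.
Lemma sumR_scalr {A} (c : R) (f : A -> R) l : sumR f l * c = sumR (fun a => f a * c) l.
Proof. induction l; unfold sumR in *; simpl; [ring|]. rewrite <- IHl; ring. Qed.
Lemma sumR_prod {A B} (f : A -> R) (g : B -> R) l1 l2 :
  sumR (fun p => f (fst p) * g (snd p)) (list_prod l1 l2) = sumR f l1 * sumR g l2.
Proof.
  induction l1; simpl. unfold sumR; simpl; ring.
  rewrite sumR_app, IHl1, sumR_map, sumR_cons; simpl.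
  rewrite <- sumR_scal. ring.
Qed.

Lemma NoDup_list_prod {A B} (l1 : list A) (l2 : list B) :
  NoDup l1 -> NoDup l2 -> NoDup (list_prod l1 l2).
Proof.
  intros H1 H2; induction H1 as [|a l1 Hn H1 IH]; simpl; [constructor|].
  apply NoDup_app; auto.
  - apply Injective_map_NoDup; auto. intros x y E; inversion E; auto.
  - intros [u v] Hin Hin2. apply in_map_iff in Hin as [w [E _]]. inversion E; subst.
    apply in_prod_iff in Hin2 as [Ha _]. contradiction.
Qed.

Lemma Listing_prod {A B} (l1 : list A) (l2 : list B) :
  Listing l1 -> Listing l2 -> Listing (list_prod l1 l2).
Proof.
  intros [N1 F1] [N2 F2]; split. apply NoDup_list_prod; auto.
  intros [u v]; apply in_prod; auto.
Qed.

Lemma Listing_sum {A B} (l1 : list A) (l2 : list B) :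
  Listing l1 -> Listing l2 -> Listing (map (@inl A B) l1 ++ map inr l2).
Proof.
  intros [N1 F1] [N2 F2]; split.
  - apply NoDup_app.
    + apply Injective_map_NoDup; auto. intros x y E; inversion E; auto.
    + apply Injective_map_NoDup; auto. intros x y E; inversion E; auto.
    + intros s H H'. apply in_map_iff in H as [u [<- _]]. apply in_map_iff in H' as [v [E _]]. discriminate.
  - intros [u|v]; apply in_or_app; [left|right]; apply in_map; auto.
Qed.

Lemma Full_sum {A B} (l1 : list A) (l2 : list B) :
  (forall a, In a l1) -> (forall b, In b l2) -> forall s, In s (map (@inl A B) l1 ++ map inr l2).
Proof. intros F1 F2 [u|v]; apply in_or_app; [left|right]; apply in_map; auto. Qed.

Lemma Listing_unit : Listing (tt :: nil).
Proof. split. constructor; [simpl; tauto|constructor]. intros []; simpl; auto. Qed.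

Definition is_int (r : R) : Prop := exists z : Z, r = IZR z.

Lemma is_int_add a b : is_int a -> is_int b -> is_int (a + b).
Proof. intros [x ->] [y ->]; exists (x + y)%Z; rewrite plus_IZR; ring. Qed.
Lemma is_int_mul a b : is_int a -> is_int b -> is_int (a * b).
Proof. intros [x ->] [y ->]; exists (x * y)%Z; rewrite mult_IZR; ring. Qed.
Lemma is_int_floor a : is_int (gfloor a).
Proof. exists (Int_part a); reflexivity. Qed.
Lemma is_int_sum {A} (f : A -> R) l : (forall a, In a l -> is_int (f a)) -> is_int (sumR f l).
Proof.
  induction l; intros H. exists 0%Z; reflexivity.
  rewrite sumR_cons; apply is_int_add; [apply H; simpl; auto|apply IHl; intros; apply H; simpl; auto].
Qed.

Lemma Int_part_char r z : IZR z <= r < IZR z + 1 -> Int_part r = z.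
Proof.
  intros [H1 H2]. unfold Int_part.
  assert (E : (z + 1)%Z = up r).
  { apply tech_up; rewrite plus_IZR; simpl; lra. }
  lia.
Qed.

Lemma gfloor_bounds r : gfloor r <= r < gfloor r + 1.
Proof. unfold gfloor; destruct (base_Int_part r); lra. Qed.

Lemma gfloor_int_add p q : is_int p -> gfloor (p + q) = p + gfloor q.
Proof.
  intros [z ->]. unfold gfloor at 1.
  rewrite (Int_part_char _ (z + Int_part q)%Z). rewrite plus_IZR; reflexivity.
  pose proof (gfloor_bounds q) as B; unfold gfloor in B. rewrite plus_IZR; lra.
Qed.

Lemma gfloor_int p : is_int p -> gfloor p = p.
Proof. intros H. replace p with (p + 0) by ring. rewrite gfloor_int_add; auto.
  unfold gfloor. rewrite (Int_part_char 0 0%Z); simpl; lra. Qed.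

Lemma Int_part_int z : Int_part (IZR z) = z.
Proof. apply Int_part_char; lra. Qed.

Fixpoint gren {A B : Type} (f : A -> B) (e : gpexpr A) : gpexpr B :=
  match e with
  | gConst c => gConst c
  | gVar v => gVar (f v)
  | gAdd e1 e2 => gAdd (gren f e1) (gren f e2)
  | gMul e1 e2 => gMul (gren f e1) (gren f e2)
  | gFloor e1 => gFloor (gren f e1)
  end.

Lemma geval_gren {A B} (f : A -> B) (y : B -> R) e :
  geval y (gren f e) = geval (fun v => y (f v)) e.
Proof. induction e; simpl; congruence. Qed.

Lemma geval_ext {A} (y y' : A -> R) e : (forall v, y v = y' v) -> geval y e = geval y' e.
Proof. intros H; induction e; simpl; congruence. Qed.

Definition gsum {A V : Type} (f : A -> gpexpr V) (l : list A) : gpexpr V :=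
  fold_right gAdd (gConst 0) (map f l).

Lemma geval_gsum {A V} (f : A -> gpexpr V) l y :
  geval y (gsum f l) = sumR (fun a => geval y (f a)) l.
Proof. induction l; unfold gsum, sumR in *; simpl; [reflexivity|]. rewrite IHl; reflexivity. Qed.

Definition frE {V} (e : gpexpr V) : gpexpr V := gAdd e (gMul (gConst (-1)) (gFloor e)).

Lemma frE_bounds {V} (x : V -> R) e : 0 <= geval x (frE e) < 1.
Proof. simpl. pose proof (gfloor_bounds (geval x e)). lra. Qed.

Lemma frE_eval {V} (x : V -> R) e : geval x (frE e) = geval x e - gfloor (geval x e).
Proof. simpl; ring. Qed.

Definition env {V K : Type} (b : K -> gpexpr V) (x : V -> R) (n : Z) (o : option K) : R :=
  match o with Some k => geval x (frE (b k)) | None => IZR n end.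

Definition sumcase {K1 K2 V : Type} (b1 : K1 -> gpexpr V) (b2 : K2 -> gpexpr V) (s : K1 + K2) :=
  match s with inl k => b1 k | inr k => b2 k end.

Lemma env_inl {V K1 K2} (b1 : K1 -> gpexpr V) (b2 : K2 -> gpexpr V) x n e :
  geval (env (sumcase b1 b2) x n) (gren (option_map inl) e) = geval (env b1 x n) e.
Proof. rewrite geval_gren; apply geval_ext; intros [v|]; reflexivity. Qed.
Lemma env_inr {V K1 K2} (b1 : K1 -> gpexpr V) (b2 : K2 -> gpexpr V) x n e :
  geval (env (sumcase b1 b2) x n) (gren (option_map inr) e) = geval (env b2 x n) e.
Proof. rewrite geval_gren; apply geval_ext; intros [v|]; reflexivity. Qed.

Section Forms.
Variable V : Type.

Definition ZForm (E : (V -> R) -> Z -> R) : Prop :=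
  exists (J K : Type) (lJ : list J) (lK : list K), Listing lJ /\ (forall k, In k lK) /\
  exists (a : J -> gpexpr V) (b : K -> gpexpr V) (h : J -> gpexpr (option K)),
    (forall x j, is_int (geval x (a j))) /\
    (forall x n j, is_int (geval (env b x n) (h j))) /\
    (forall x n, E x n = sumR (fun j => geval x (a j) * geval (env b x n) (h j)) lJ).

Definition FForm (E : (V -> R) -> Z -> R) : Prop :=
  exists (K : Type) (lK : list K), (forall k, In k lK) /\
  exists (b : K -> gpexpr V) (q : gpexpr (option K)),
    forall x n, E x n = geval (env b x n) q.

Lemma ZForm_ext E E' : (forall x n, E x n = E' x n) -> ZForm E -> ZForm E'.
Proof.
  intros H (J & K & lJ & lK & HJ & HK & a & b & h & Ha & Hh & HE).
  exists J, K, lJ, lK; split; auto; split; auto; exists a, b, h; split; auto; split; auto.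
  intros; rewrite <- H; auto.
Qed.

Lemma ZForm_int E : ZForm E -> forall x n, is_int (E x n).
Proof.
  intros (J & K & lJ & lK & HJ & HK & a & b & h & Ha & Hh & HE) x n.
  rewrite HE; apply is_int_sum; intros; apply is_int_mul; auto.
Qed.

Lemma ZForm_zero : ZForm (fun _ _ => 0).
Proof.
  exists Empty_set, Empty_set, nil, nil; split; [split; [constructor|intros []]|].
  split; [intros []|].
  exists (fun e : Empty_set => match e return _ with end), (fun e : Empty_set => match e return _ with end), (fun e : Empty_set => match e return _ with end).
  split; [intros _ []|]; split; [intros _ _ []|]. reflexivity.
Qed.

Lemma ZForm_gen (c : gpexpr V) (q : gpexpr (option Empty_set)) :
  (forall x, is_int (geval x c)) -> (forall x n, is_int (geval (env (fun e : Empty_set => match e return gpexpr V with end) x n) q)) ->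
  ZForm (fun x n => geval x c * geval (env (fun e : Empty_set => match e return gpexpr V with end) x n) q).
Proof.
  intros Hc Hq.
  exists unit, Empty_set, (tt :: nil), nil; split; [apply Listing_unit|]; split; [intros []|].
  exists (fun _ : unit => c), (fun e : Empty_set => match e return _ with end), (fun _ : unit => q).
  split; [auto|]; split; [auto|]. intros; unfold sumR; simpl; ring.
Qed.

Lemma ZForm_cint (c : gpexpr V) : (forall x, is_int (geval x c)) -> ZForm (fun x n => geval x c).
Proof.
  intros Hc. eapply ZForm_ext; [|apply (ZForm_gen c (gConst 1)); auto].
  intros; simpl; ring. intros; exists 1%Z; reflexivity.
Qed.

Lemma ZForm_n : ZForm (fun x n => IZR n).
Proof.
  eapply ZForm_ext; [|apply (ZForm_gen (gConst 1) (gVar None))].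
  intros; simpl; ring. intros; exists 1%Z; reflexivity. intros x n; exists n; reflexivity.
Qed.

Lemma ZForm_add E1 E2 : ZForm E1 -> ZForm E2 -> ZForm (fun x n => E1 x n + E2 x n).
Proof.
  intros (J1 & K1 & lJ1 & lK1 & HJ1 & HK1 & a1 & b1 & h1 & Ha1 & Hh1 & HE1)
         (J2 & K2 & lJ2 & lK2 & HJ2 & HK2 & a2 & b2 & h2 & Ha2 & Hh2 & HE2).
  exists (J1 + J2)%type, (K1 + K2)%type, (map inl lJ1 ++ map inr lJ2), (map inl lK1 ++ map inr lK2).
  split; [apply Listing_sum; auto|]; split; [apply Full_sum; auto|].
  exists (sumcase a1 a2), (sumcase b1 b2),
    (fun j => match j with inl j1 => gren (option_map inl) (h1 j1) | inr j2 => gren (option_map inr) (h2 j2) end).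
  split; [intros x [j|j]; simpl; auto|].
  split; [intros x n [j|j]; [rewrite env_inl|rewrite env_inr]; auto|].
  intros x n. rewrite sumR_app, !sumR_map, HE1, HE2. simpl.
  f_equal; apply sumR_ext; intros; [rewrite env_inl|rewrite env_inr]; reflexivity.
Qed.

Lemma ZForm_mul E1 E2 : ZForm E1 -> ZForm E2 -> ZForm (fun x n => E1 x n * E2 x n).
Proof.
  intros (J1 & K1 & lJ1 & lK1 & HJ1 & HK1 & a1 & b1 & h1 & Ha1 & Hh1 & HE1)
         (J2 & K2 & lJ2 & lK2 & HJ2 & HK2 & a2 & b2 & h2 & Ha2 & Hh2 & HE2).
  exists (J1 * J2)%type, (K1 + K2)%type, (list_prod lJ1 lJ2), (map inl lK1 ++ map inr lK2).
  split; [apply Listing_prod; auto|]; split; [apply Full_sum; auto|].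
  exists (fun j => gMul (a1 (fst j)) (a2 (snd j))), (sumcase b1 b2),
    (fun j => gMul (gren (option_map inl) (h1 (fst j))) (gren (option_map inr) (h2 (snd j)))).
  split; [intros x [j1 j2]; simpl; apply is_int_mul; auto|].
  split; [intros x n [j1 j2]; simpl; rewrite env_inl, env_inr; apply is_int_mul; auto|].
  intros x n. rewrite HE1, HE2, <- sumR_prod. apply sumR_ext; intros [j1 j2] _; simpl.
  rewrite env_inl, env_inr; ring.
Qed.

Lemma FForm_add E1 E2 : FForm E1 -> FForm E2 -> FForm (fun x n => E1 x n + E2 x n).
Proof.
  intros (K1 & lK1 & HK1 & b1 & q1 & HE1) (K2 & lK2 & HK2 & b2 & q2 & HE2).
  exists (K1 + K2)%type, (map inl lK1 ++ map inr lK2); split; [apply Full_sum; auto|].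
  exists (sumcase b1 b2), (gAdd (gren (option_map inl) q1) (gren (option_map inr) q2)).
  intros; simpl; rewrite env_inl, env_inr, HE1, HE2; reflexivity.
Qed.

Lemma FForm_zero : FForm (fun _ _ => 0).
Proof.
  exists Empty_set, nil; split; [intros []|].
  exists (fun e : Empty_set => match e return _ with end), (gConst 0); reflexivity.
Qed.

Lemma FForm_floor E : FForm E -> ZForm (fun x n => gfloor (E x n)).
Proof.
  intros (K & lK & HK & b & q & HE).
  exists unit, K, (tt :: nil), lK; split; [apply Listing_unit|]; split; auto.
  exists (fun _ => gConst 1), b, (fun _ => gFloor q).
  split; [intros; exists 1%Z; reflexivity|]. split; [intros; simpl; apply is_int_floor|].
  intros; unfold sumR; simpl; rewrite HE; ring.
Qed.

Lemma ZForm_split (c : gpexpr V) M : ZForm M ->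
  exists P Q, ZForm P /\ FForm Q /\ forall x n, geval x c * M x n = P x n + Q x n.
Proof.
  intros (J & K & lJ & lK & HJ & HK & a & b & h & Ha & Hh & HE).
  exists (fun x n => sumR (fun j => geval x (gFloor (gMul c (a j))) * geval (env b x n) (h j)) lJ).
  exists (fun x n => geval (env (sumcase b (fun j => gMul c (a j))) x n)
     (gsum (fun j => gMul (gVar (Some (inr j))) (gren (option_map inl) (h j))) lJ)).
  split; [|split].
  - exists J, K, lJ, lK; split; auto; split; auto.
    exists (fun j => gFloor (gMul c (a j))), b, h; split; [intros; apply is_int_floor|]; split; auto.
  - exists (K + J)%type, (map inl lK ++ map inr (fst (lJ, tt))).
    split; [apply Full_sum; auto; apply HJ|]. eexists; eexists; reflexivity.
  - intros x n. rewrite geval_gsum, HE, sumR_scal, <- sumR_plus.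
    apply sumR_ext; intros j _. simpl. rewrite env_inl. ring.
Qed.

Definition RForm (E : (V -> R) -> Z -> R) : Prop :=
  exists l : list (gpexpr V * ((V -> R) -> Z -> R)),
    (forall p, In p l -> ZForm (snd p)) /\
    forall x n, E x n = sumR (fun p => geval x (fst p) * snd p x n) l.

Lemma RForm_split E : RForm E ->
  exists P Q, ZForm P /\ FForm Q /\ forall x n, E x n = P x n + Q x n.
Proof.
  intros (l & Hl & HE). revert E HE. induction l as [|[c M] l IH]; intros E HE.
  - exists (fun _ _ => 0), (fun _ _ => 0); split; [apply ZForm_zero|]; split; [apply FForm_zero|].
    intros; rewrite HE; unfold sumR; simpl; ring.
  - destruct (IH (fun p H => Hl p (or_intror H)) _ (fun x n => eq_refl)) as (P & Q & HP & HQ & HPQ).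
    destruct (ZForm_split c M (Hl _ (or_introl eq_refl))) as (P' & Q' & HP' & HQ' & HPQ').
    exists (fun x n => P' x n + P x n), (fun x n => Q' x n + Q x n).
    split; [apply ZForm_add; auto|]; split; [apply FForm_add; auto|].
    intros x n; rewrite HE, sumR_cons; simpl. rewrite HPQ', HPQ. ring.
Qed.

Lemma RForm_floor E : RForm E -> ZForm (fun x n => gfloor (E x n)).
Proof.
  intros H; destruct (RForm_split E H) as (P & Q & HP & HQ & HPQ).
  eapply ZForm_ext; [|apply ZForm_add; [apply HP|apply FForm_floor; apply HQ]].
  intros x n; simpl. rewrite HPQ, gfloor_int_add; auto. apply ZForm_int; auto.
Qed.

Lemma RForm_of_Z E : ZForm E -> RForm E.
Proof.
  intros H; exists ((gConst 1, E) :: nil); split.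
  - intros p [<-|[]]; auto.
  - intros; unfold sumR; simpl; ring.
Qed.

Lemma RForm_ext E E' : (forall x n, E x n = E' x n) -> RForm E -> RForm E'.
Proof. intros H (l & Hl & HE); exists l; split; auto; intros; rewrite <- H; auto. Qed.

Lemma RForm_scal (c : gpexpr V) E : ZForm E -> RForm (fun x n => geval x c * E x n).
Proof.
  intros H; exists ((c, E) :: nil); split.
  - intros p [<-|[]]; auto.
  - intros; unfold sumR; simpl; ring.
Qed.

Lemma RForm_add E1 E2 : RForm E1 -> RForm E2 -> RForm (fun x n => E1 x n + E2 x n).
Proof.
  intros (l1 & H1 & E1e) (l2 & H2 & E2e); exists (l1 ++ l2); split.
  - intros p Hp; apply in_app_or in Hp as [Hp|Hp]; auto.
  - intros; rewrite sumR_app, E1e, E2e; reflexivity.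
Qed.

Lemma RForm_mul E1 E2 : RForm E1 -> RForm E2 -> RForm (fun x n => E1 x n * E2 x n).
Proof.
  intros (l1 & H1 & E1e) (l2 & H2 & E2e).
  exists (map (fun pq => (gMul (fst (fst pq)) (fst (snd pq)),
                          fun x n => snd (fst pq) x n * snd (snd pq) x n)) (list_prod l1 l2)).
  split.
  - intros p Hp; apply in_map_iff in Hp as [[p1 p2] [<- Hin]].
    apply in_prod_iff in Hin as [Hi1 Hi2]; simpl; apply ZForm_mul; auto.
  - intros x n; rewrite E1e, E2e, <- sumR_prod, sumR_map.
    apply sumR_ext; intros [[c1 M1] [c2 M2]] _; simpl; ring.
Qed.

Definition envA (x : V -> R) (n : Z) (o : option V) : R :=
  match o with Some v => x v | None => IZR n end.

Lemma RForm_all (e : gpexpr (option V)) : RForm (fun x n => geval (envA x n) e).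
Proof.
  induction e as [c|[v|]|e1 IH1 e2 IH2|e1 IH1 e2 IH2|e1 IH1]; simpl.
  - eapply RForm_ext; [|apply (RForm_scal (gConst c)); apply (ZForm_cint (gConst 1)); intros; exists 1%Z; reflexivity].
    intros; simpl; ring.
  - eapply RForm_ext; [|apply (RForm_scal (gVar v)); apply (ZForm_cint (gConst 1)); intros; exists 1%Z; reflexivity].
    intros; simpl; ring.
  - apply RForm_of_Z, ZForm_n.
  - apply RForm_add; auto.
  - apply RForm_mul; auto.
  - apply RForm_of_Z, RForm_floor; auto.
Qed.

End Forms.

Theorem proposition3p4 :
  forall (I : Type), Finite I ->
  forall g : (PVar I Empty_set Empty_set -> R) -> Z -> Z,
    gp_param g ->
    exists (J K : Type) (lJ : list J),
      Listing lJ /\ Finite K /\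
      exists (gt : (PVar Empty_set J K -> R) -> Z -> Z)
             (h : J -> (PVar Empty_set Empty_set K -> R) -> Z -> Z),
        gp_param gt /\ gp_extends g gt /\
        (forall j : J, gp_param (h j)) /\
        (forall x, in_Omega x -> forall n : Z,
           IZR (gt x n) =
           fold_right Rplus 0
             (map (fun j => x (inl (inr j)) * IZR (h j (fun v => x (embK v)) n)) lJ)).
Proof.
  intros I _ g [e He].
  set (V := PVar I Empty_set Empty_set).
  assert (Om : forall x : V -> R, in_Omega x).
  { intros x; split; intros []. }
  assert (HZ : ZForm V (fun x n => IZR (g x n))).
  { eapply ZForm_ext; [|apply RForm_floor, (RForm_all V e)].
    intros x n; simpl. rewrite gfloor_int.
    - rewrite (He x (Om x) n). apply geval_ext; intros [v|]; reflexivity.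
    - exists (g x n). rewrite (He x (Om x) n). apply geval_ext; intros [v|]; reflexivity. }
  destruct HZ as (J & K & lJ & lK & HJ & HK & a & b & h & Ha & Hh & HE).
  set (hfin := fun (j : J) (be : PVar Empty_set Empty_set K -> R) (n : Z) =>
         Int_part (geval (fun v => match v with Some k => be (inr k) | None => IZR n end) (h j))).
  set (gt := fun (x : PVar Empty_set J K -> R) (n : Z) =>
         Int_part (sumR (fun j => x (inl (inr j)) * IZR (hfin j (fun v => x (embK v)) n)) lJ)).
  exists J, K, lJ; split; [exact HJ|]; split; [exists lK; exact HK|].
  exists gt, hfin.
  assert (Hgt : forall x n, IZR (gt x n) =
     gfloor (sumR (fun j => x (inl (inr j)) * IZR (hfin j (fun v => x (embK v)) n)) lJ)).
  { intros; reflexivity. }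
  split; [|split; [|split]].
  - exists (gFloor (gsum (fun j => gMul (gVar (Some (inl (inr j))))
                 (gFloor (gren (option_map inr) (h j)))) lJ)).
    intros x _ n. rewrite Hgt. simpl. rewrite geval_gsum. f_equal.
    apply sumR_ext; intros j _; simpl. f_equal. unfold hfin.
    rewrite geval_gren. change (IZR (Int_part ?r)) with (gfloor r). f_equal.
    apply geval_ext; intros [k|]; reflexivity.
  - set (phi := fun (x : V -> R) (v : PVar Empty_set J K) =>
           match v with
           | inl (inl e0) => match e0 return R with end
           | inl (inr j) => geval x (a j)
           | inr k => geval x (frE (b k)) end).
    exists phi; split; [|split].
    + intros [[e0|j]|k]; [destruct e0| exists (a j) | exists (frE (b k))]; intros; reflexivity.
    + intros x _; split; [intros j; apply Ha|intros k; apply frE_bounds].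
    + intros x _ n. apply eq_IZR. unfold gt.
      assert (Hs : sumR (fun j => phi x (inl (inr j)) * IZR (hfin j (fun v => phi x (embK v)) n)) lJ
                   = IZR (g x n)).
      { rewrite HE. apply sumR_ext; intros j _. simpl. f_equal. unfold hfin.
        change (IZR (Int_part ?r)) with (gfloor r). rewrite gfloor_int.
        - apply geval_ext; intros [k|]; reflexivity.
        - erewrite geval_ext; [apply (Hh x n j)|]. intros [k|]; reflexivity. }
      rewrite Hs, Int_part_int; reflexivity.
  - intros j. exists (gFloor (gren (option_map inr) (h j))).
    intros be _ n. unfold hfin. change (IZR (Int_part ?r)) with (gfloor r). simpl.
    rewrite geval_gren. f_equal. apply geval_ext; intros [k|]; reflexivity.
  - intros x Hx n. rewrite Hgt, gfloor_int; [reflexivity|].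
    apply is_int_sum; intros j _. apply is_int_mul.
    + destruct Hx as [Hx _]. destruct (Hx j) as [z Hz]; exists z; exact Hz.
    + eexists; reflexivity.
Qed.
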